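(* For every integer $m \geq 1$, the clique number of the graph $\mathrm{Cay}(\tau_m)$ is at least $2^m$.
   Context: Identify $\mathbb{Z}_2^{2m}$ with the integers $0,\dots,4^m-1$ via binary representation, so each $i \in \mathbb{Z}_2^{2m}$ has a base-4 representation with $m$ digits (each base-4 digit being a consecutive pair of bits). Define $\tau_m:\mathbb{Z}_2^{2m}\to\mathbb{Z}_2$ by $\tau_m(i)=1$ if and only if the number of base-4 digits of $i$ equal to $1$ or $2$ is nonzero and the number of base-4 digits of $i$ equal to $1$ is even. The Cayley graph $\mathrm{Cay}(\tau_m)$ is the simple undirected graph with vertex set $\mathbb{Z}_2^{2m}$ in which distinct $i,j$ are adjacent if and only if $\tau_m(i+j)=1$. *)

(* Defs.v *)
From mathcomp Require Import all_boot.
From Stdlib Require PeanoNat.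
Set Implicit Arguments. Unset Strict Implicit. Unset Printing Implicit Defensive.

(* Z_2^{2m} is identified with the integers 0..4^m-1 ('I_(4^m)); the group
   addition of Z_2^{2m} is bitwise XOR of binary representations. *)
Definition vadd (a b : nat) : nat := PeanoNat.Nat.lxor a b.

Definition digit4 (i k : nat) : nat := (i %/ 4 ^ k) %% 4.

Definition digits4 (m i : nat) : seq nat := [seq digit4 i k | k <- iota 0 m].

Definition tau (m i : nat) : bool :=
  (count (fun d => (d == 1) || (d == 2)) (digits4 m i) != 0)
  && ~~ odd (count (pred1 1) (digits4 m i)).

Definition cay_adj (m : nat) (i j : 'I_(4 ^ m)) : bool :=
  (i != j) && tau m (vadd i j).

Definition is_clique (m : nat) (S : {set 'I_(4 ^ m)}) : bool :=
  [forall i in S, forall j in S, (i != j) ==> cay_adj i j].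

Definition clique_number (m : nat) : nat :=
  \max_(S : {set 'I_(4 ^ m)} | is_clique S) #|S|.

(* Main.v *)
Require Import Defs.
From Stdlib Require Import PeanoNat Lia.
From mathcomp Require Import all_boot zify.

Lemma div2_bit (u a : nat) : u < 2 -> Nat.div2 (u + 2 * a) = a.
Proof.
case: u => [|[|u]] // _.
- by rewrite add0n Nat.div2_double.
- by rewrite add1n Nat.div2_succ_double.
Qed.

Lemma tb0_bit (u a : nat) : u < 2 -> Nat.testbit (u + 2 * a) 0 = (u == 1).
Proof.
move=> hu; rewrite Nat.bit0_odd.
case: u hu => [|[|u]] // _.
- by rewrite add0n Nat.odd_mul.
- by rewrite add1n Nat.odd_succ Nat.even_mul.
Qed.

Lemma tbS_bit (u a n : nat) : u < 2 -> Nat.testbit (u + 2 * a) n.+1 = Nat.testbit a n.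
Proof. by move=> hu; rewrite -Nat.testbit_div2 div2_bit. Qed.

Lemma lx1 u v a b : u < 2 -> v < 2 ->
  Nat.lxor (u + 2 * a) (v + 2 * b) = Nat.lxor u v + 2 * Nat.lxor a b.
Proof.
move=> hu hv.
have hx : Nat.lxor u v < 2 by case: u hu => [|[|]] //; case: v hv => [|[|]].
apply: Nat.bits_inj => -[|n]; rewrite Nat.lxor_spec.
- rewrite !tb0_bit //. by case: u hu {hx} => [|[|]] //; case: v hv => [|[|]].
- by rewrite !tbS_bit // Nat.lxor_spec.
Qed.

Lemma lx_dec x y : Nat.lxor x y = Nat.lxor (x %% 2) (y %% 2) + 2 * Nat.lxor (x %/ 2) (y %/ 2).
Proof.
rewrite -lx1; try exact: ltn_pmod.
by congr Nat.lxor; lia.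
Qed.

Lemma lx_small u v : u < 2 -> v < 2 -> Nat.lxor u v < 2.
Proof. by case: u => [|[|]] //; case: v => [|[|]]. Qed.

Fixpoint g n x := if n is n'.+1 then 2 * (x %% 2) + 4 * g n' (x %/ 2) else 0.

Lemma g_lt n x : g n x < 4 ^ n.
Proof.
elim: n x => [|n IH] x //=. have := IH (x %/ 2). have := ltn_pmod x (isT : 0 < 2).
rewrite expnS. lia.
Qed.

Lemma g_inj n x y : x < 2 ^ n -> y < 2 ^ n -> g n x = g n y -> x = y.
Proof.
elim: n x y => [|n IH] x y /=; first by rewrite expn0; case: x; case: y.
rewrite expnS => hx hy e.
have hx2 := ltn_pmod x (isT : 0 < 2). have hy2 := ltn_pmod y (isT : 0 < 2).
have e1 : x %% 2 = y %% 2 by lia.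
have e2 : g n (x %/ 2) = g n (y %/ 2) by lia.
have := IH _ _ _ _ e2. rewrite (divn_eq x 2) (divn_eq y 2) in hx hy.
move=> /(_ ltac:(lia) ltac:(lia)) e3.
by rewrite (divn_eq x 2) (divn_eq y 2) e1 e3.
Qed.

Lemma g_lxor n x y : Nat.lxor (g n x) (g n y) = g n (Nat.lxor x y).
Proof.
elim: n x y => [|n IH] x y /=; first by rewrite Nat.lxor_0_r.
have hx2 := ltn_pmod x (isT : 0 < 2). have hy2 := ltn_pmod y (isT : 0 < 2).
have e4 : forall p a, 2 * p + 4 * a = 0 + 2 * (p + 2 * a) by move=> p a; lia.
rewrite !e4 lx1 // lx1 // IH.
have hs := @lx_small _ _ hx2 hy2.
rewrite [Nat.lxor x y]lx_dec.
set s := Nat.lxor (x %% 2) (y %% 2); set t := Nat.lxor (x %/ 2) (y %/ 2).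
have -> : (s + 2 * t) %% 2 = s by lia.
have -> : (s + 2 * t) %/ 2 = t by lia.
by [].
Qed.

Lemma lx_lt n x y : x < 2 ^ n -> y < 2 ^ n -> Nat.lxor x y < 2 ^ n.
Proof.
elim: n x y => [|n IH] x y; first by rewrite expn0; case: x; case: y.
rewrite expnS => hx hy.
have hx2 := ltn_pmod x (isT : 0 < 2). have hy2 := ltn_pmod y (isT : 0 < 2).
rewrite lx_dec.
have := IH (x %/ 2) (y %/ 2). have := @lx_small _ _ hx2 hy2.
rewrite (divn_eq x 2) in hx. rewrite (divn_eq y 2) in hy. lia.
Qed.

Lemma digits4S n i : digits4 n.+1 i = (i %% 4) :: digits4 n (i %/ 4).
Proof.
rewrite /digits4 /= /digit4 expn0 divn1; congr (_ :: _).
rewrite -(addn0 1) iotaDl -map_comp; apply: eq_map => k /=.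
by rewrite add1n expnS divnMA.
Qed.

Lemma g_mod n x : g n.+1 x %% 4 = 2 * (x %% 2).
Proof. rewrite /=. have := ltn_pmod x (isT : 0 < 2). lia. Qed.

Lemma g_div n x : g n.+1 x %/ 4 = g n (x %/ 2).
Proof. rewrite /=. have := ltn_pmod x (isT : 0 < 2). lia. Qed.

Lemma g_cnt1 n x : count (pred1 1) (digits4 n (g n x)) = 0.
Proof.
elim: n x => [|n IH] x //. rewrite digits4S g_mod g_div /= IH addn0.
by case: (x %% 2) => [|[|]].
Qed.

Lemma g_cnt2 n x : x < 2 ^ n -> x != 0 ->
  count (fun d => (d == 1) || (d == 2)) (digits4 n (g n x)) != 0.
Proof.
elim: n x => [|n IH] x; first by rewrite expn0; case: x.
rewrite expnS digits4S g_mod g_div /= => hx hx0.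
have hx2 := ltn_pmod x (isT : 0 < 2).
case e: (x %% 2) => [|[|]] //; last by lia.
rewrite add0n; apply: IH; rewrite (divn_eq x 2) e in hx hx0; lia.
Qed.

Theorem lemma4 (m : nat) (hm : 1 <= m) : 2 ^ m <= clique_number m.
Proof.
pose h (x : 'I_(2 ^ m)) : 'I_(4 ^ m) := Ordinal (g_lt m x).
have hinj : injective h.
  move=> x y e; apply: val_inj; apply: (@g_inj m _ _ (ltn_ord x) (ltn_ord y)).
  exact: (congr1 val e).
have hcl : is_clique (h @: [set: 'I_(2 ^ m)]).
  apply/forallP => i; apply/implyP => /imsetP [x _ ->].
  apply/forallP => j; apply/implyP => /imsetP [y _ ->].
  apply/implyP => hne; rewrite /cay_adj hne /= /tau /vadd /= g_lxor g_cnt1 andbT.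
  apply: g_cnt2; first exact: lx_lt.
  apply/eqP => /Nat.lxor_eq e; move/eqP: hne; apply; congr h; exact: val_inj.
apply: leq_trans (leq_bigmax_cond _ hcl).
by rewrite card_imset // cardsT card_ord.
Qed.
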